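(* Let $T\in\mathbb{R}^{n\times n}$ be skew-symmetric, $S\in\mathbb{R}^{k\times k}$ skew-symmetric and $\Lambda\in\mathbb{R}^{k\times k}$ symmetric, all fixed. For $U\in\mathbb{R}^{n\times k}_{\ge 0}$ put $Q=T^{\top}US$, $P=S^{\top}U^{\top}US$ and $$F(U)=\mathrm{tr}\big(-2U^{\top}T^{\top}US+US^{\top}U^{\top}USU^{\top}+U\Lambda U^{\top}\big).$$ Assume $P_{+}+\Lambda\ge 0$ entrywise. For $U\ge 0$ and $U'$ with strictly positive entries define $$Z(U,U')=\mathrm{tr}\big(-2Q_{+}U^{\top}-UP_{-}U^{\top}\big)+\sum_{i,j}\left(\frac{[U'(P_{+}+\Lambda)]_{ij}U_{ij}^2}{U'_{ij}}+2[Q_{-}]_{ij}\frac{U_{ij}^2+U_{ij}'^2}{2U'_{ij}}\right),$$ with $Q,P$ computed from $U$. Then $Z$ is an auxiliary function of $F$, i.e. $Z(U,U')\ge F(U)$ for all such $U,U'$, and $Z(U,U)=F(U)$.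
   Context: For a real matrix $X$, $X_{+}$ and $X_{-}$ denote its positive and negative parts: $X_{+}=\max(X,0)$, $X_{-}=\max(-X,0)$ entrywise, so $X=X_{+}-X_{-}$ with $X_{\pm}\ge 0$. *)

(* Defs.v *)
From HB Require Import structures.
From mathcomp Require Import all_boot all_order all_algebra.
From mathcomp Require Import reals.
Set Implicit Arguments. Unset Strict Implicit. Unset Printing Implicit Defensive.
Import Order.TTheory GRing.Theory Num.Theory.
Local Open Scope ring_scope.

Section Defs.
Variable R : realType.

Definition mxpos m n (X : 'M[R]_(m, n)) : 'M[R]_(m, n) :=
  map_mx (fun x => Num.max x 0) X.
Definition mxneg m n (X : 'M[R]_(m, n)) : 'M[R]_(m, n) :=
  map_mx (fun x => Num.max (- x) 0) X.

Definition mx_nonneg m n (X : 'M[R]_(m, n)) : Prop := forall i j, 0 <= X i j.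
Definition mx_pos m n (X : 'M[R]_(m, n)) : Prop := forall i j, 0 < X i j.

Variables (n k : nat) (T : 'M[R]_n) (S Lam : 'M[R]_k).

Definition Qmx (U : 'M[R]_(n, k)) : 'M[R]_(n, k) := T^T *m U *m S.
Definition Pmx (U : 'M[R]_(n, k)) : 'M[R]_k := S^T *m U^T *m U *m S.

Definition Fobj (U : 'M[R]_(n, k)) : R :=
  \tr (- 2%:R *: (U^T *m T^T *m U *m S)) + \tr (U *m S^T *m U^T *m U *m S *m U^T)
  + \tr (U *m Lam *m U^T).

Definition Zaux (U U' : 'M[R]_(n, k)) : R :=
  \tr (- 2%:R *: (mxpos (Qmx U) *m U^T) - U *m mxneg (Pmx U) *m U^T)
  + \sum_(i < n) \sum_(j < k)
      ((U' *m (mxpos (Pmx U) + Lam)) i j * (U i j) ^+ 2 / U' i j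
       + 2%:R * mxneg (Qmx U) i j * (((U i j) ^+ 2 + (U' i j) ^+ 2) / (2%:R * U' i j))).
End Defs.

(* Main.v *)
Require Import Defs.
From HB Require Import structures.
From mathcomp Require Import all_boot all_order all_algebra.
From mathcomp Require Import reals.
From mathcomp Require Import ring lra.
Import Order.TTheory GRing.Theory Num.Theory.
Local Open Scope ring_scope.

Section Helpers.
Variable R : realType.

Lemma posneg m p (X : 'M[R]_(m,p)) : X = mxpos X - mxneg X.
Proof.
apply/matrixP => i j; rewrite !mxE !maxEle.
have [h|h] := leP 0 (X i j).
  rewrite oppr_le0 h; case: ifP => h2; last by rewrite subr0.
  have -> : X i j = 0 by apply/le_anti; rewrite h h2.
  by rewrite subr0.
rewrite oppr_le0 (ltW h) leNgt h /=.
by rewrite sub0r opprK.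
Qed.

Lemma mxpos_ge0 m p (X : 'M[R]_(m,p)) i j : 0 <= mxneg X i j.
Proof. by rewrite mxE maxEle; case: ifP => //; rewrite leNgt => /negbFE /ltW. Qed.

Lemma tr_inner m p (A B : 'M[R]_(m,p)) :
  \tr (A *m B^T) = \sum_i \sum_j A i j * B i j.
Proof.
rewrite /mxtrace; apply eq_bigr => i _; rewrite mxE.
by apply eq_bigr => j _; rewrite mxE.
Qed.

Lemma key p (A : 'M[R]_p) (u v : 'I_p -> R) :
  A^T = A -> (forall i j, 0 <= A i j) -> (forall j, 0 < v j) ->
  \sum_j (\sum_l u l * A l j) * u j <= \sum_j (\sum_l v l * A l j) * u j ^+ 2 / v j.
Proof.
move=> As Ag vp.
have Asym l j : A j l = A l j by rewrite -{1}As mxE.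
set f := fun l j => A l j * (v l * u j ^+ 2 / v j - u l * u j).
have E1 : \sum_j (\sum_l v l * A l j) * u j ^+ 2 / v j - \sum_j (\sum_l u l * A l j) * u j
    = \sum_j \sum_l f l j.
  rewrite -sumrB; apply eq_bigr => j _.
  rewrite !mulr_suml -sumrB; apply eq_bigr => l _; rewrite /f; ring.
have E2 : \sum_j \sum_l f l j = \sum_j \sum_l f j l by exact: exchange_big.
have H : 0 <= \sum_j \sum_l (f l j + f j l).
  apply: sumr_ge0 => j _; apply: sumr_ge0 => l _.
  rewrite /f Asym -mulrDr; apply: mulr_ge0 => //.
  have vj := vp j; have vl := vp l.
  have -> : v l * u j ^+ 2 / v j - u l * u j + (v j * u l ^+ 2 / v l - u j * u l)
     = (v l * u j - v j * u l) ^+ 2 / (v j * v l).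
    by field; apply/andP; split; rewrite gt_eqF.
  by apply: divr_ge0; [exact: sqr_ge0 | apply: mulr_ge0; exact: ltW].
have : 0 <= 2 * (\sum_j \sum_l f l j).
  rewrite mulr2n mulrDl mul1r {2}E2 -big_split /=.
  by under eq_bigr do rewrite -big_split.
rewrite -E1 => HH. lra.
Qed.

Definition ip m p (U X : 'M[R]_(m,p)) := \sum_i \sum_j X i j * U i j.
Arguments ip {m p}.

Lemma ipD m p (U X Y : 'M[R]_(m,p)) : ip U (X + Y) = ip U X + ip U Y.
Proof.
rewrite /ip -big_split; apply eq_bigr => i _; rewrite -big_split.
by apply eq_bigr => j _; rewrite mxE mulrDl.
Qed.

Lemma ipB m p (U X Y : 'M[R]_(m,p)) : ip U (X - Y) = ip U X - ip U Y.
Proof.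
rewrite /ip -sumrB; apply eq_bigr => i _; rewrite -sumrB.
by apply eq_bigr => j _; rewrite !mxE mulrBl.
Qed.

Lemma ipN m p (U X : 'M[R]_(m,p)) : ip U (- X) = - ip U X.
Proof. by rewrite -(sub0r X) ipB /ip big1 ?sub0r // => i _; rewrite big1 // => j _; rewrite mxE mul0r. Qed.

Lemma mxpos_tr m p (X : 'M[R]_(m,p)) : (mxpos X)^T = mxpos X^T.
Proof. by apply/matrixP => i j; rewrite !mxE. Qed.

End Helpers.
Arguments ip {R m p}.
Arguments key {R p A u v}.
Arguments posneg {R m p}.
Arguments mxpos_ge0 {R m p}.
Arguments tr_inner {R m p}.
Arguments ipD {R m p}.
Arguments ipB {R m p}.
Arguments mxpos_tr {R m p}.

Theorem lemma3 (R : realType) (n k : nat) (T : 'M[R]_n) (S Lam : 'M[R]_k) :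
  T^T = - T -> S^T = - S -> Lam^T = Lam ->
  (forall (U U' : 'M[R]_(n, k)),
      mx_nonneg U -> mx_pos U' ->
      mx_nonneg (mxpos (Pmx S U) + Lam) ->
      Fobj T S Lam U <= Zaux T S Lam U U') /\
  (forall (U : 'M[R]_(n, k)),
      mx_pos U -> mx_nonneg (mxpos (Pmx S U) + Lam) ->
      Zaux T S Lam U U = Fobj T S Lam U).
Proof.
move=> _ _ Lsym.
have trip (U X : 'M[R]_(n,k)) : \tr (X *m U^T) = ip U X by rewrite tr_inner.
have Fe (U : 'M[R]_(n,k)) : Fobj T S Lam U =
   - 2%:R * ip U (mxpos (Qmx T S U)) + 2%:R * ip U (mxneg (Qmx T S U))
   + ip U (U *m (mxpos (Pmx S U) + Lam)) - ip U (U *m mxneg (Pmx S U)).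
  rewrite /Fobj mxtraceZ.
  have -> : U^T *m T^T *m U *m S = U^T *m Qmx T S U by rewrite /Qmx !mulmxA.
  rewrite mxtrace_mulC !trip.
  have -> : U *m S^T *m U^T *m U *m S = U *m Pmx S U
    by rewrite /Pmx !mulmxA.
  rewrite {1}(posneg (Qmx T S U)) {1}(posneg (Pmx S U)) ipB.
  rewrite !mulmxDr mulmxN !ipD ipN; ring.
have Ze (U U' : 'M[R]_(n,k)) : Zaux T S Lam U U' =
   - 2%:R * ip U (mxpos (Qmx T S U)) - ip U (U *m mxneg (Pmx S U))
   + \sum_(i < n) \sum_(j < k) ((U' *m (mxpos (Pmx S U) + Lam)) i j * (U i j) ^+ 2 / U' i j)
   + \sum_(i < n) \sum_(j < k) (2%:R * mxneg (Qmx T S U) i j *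
        (((U i j) ^+ 2 + (U' i j) ^+ 2) / (2%:R * U' i j))).
  rewrite /Zaux raddfB /= mxtraceZ !trip -!addrA; congr (_ + (_ + _)).
  rewrite -big_split; apply eq_bigr => i _; rewrite -big_split //.
have Asym (U : 'M[R]_(n,k)) : (mxpos (Pmx S U) + Lam)^T = mxpos (Pmx S U) + Lam.
  rewrite raddfD /= Lsym mxpos_tr; congr (mxpos _ + _).
  by rewrite /Pmx !trmx_mul !trmxK !mulmxA.
split.
  move=> U U' _ U'p Ag.
  rewrite Fe Ze.
  have H1 : ip U (U *m (mxpos (Pmx S U) + Lam)) <=
     \sum_(i < n) \sum_(j < k) ((U' *m (mxpos (Pmx S U) + Lam)) i j * (U i j) ^+ 2 / U' i j).
    apply: ler_sum => i _.
    under eq_bigr do rewrite mxE.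
    under [X in _ <= X]eq_bigr do rewrite mxE.
    exact: (key (Asym U) Ag (fun j => U'p i j)).
  have H2 : 2%:R * ip U (mxneg (Qmx T S U)) <=
     \sum_(i < n) \sum_(j < k) (2%:R * mxneg (Qmx T S U) i j *
        (((U i j) ^+ 2 + (U' i j) ^+ 2) / (2%:R * U' i j))).
    rewrite /ip mulr_sumr; apply: ler_sum => i _.
    rewrite mulr_sumr; apply: ler_sum => j _.
    have vp := U'p i j.
    rewrite -subr_ge0.
    have -> : 2%:R * mxneg (Qmx T S U) i j * ((U i j ^+ 2 + U' i j ^+ 2) / (2%:R * U' i j))
       - 2%:R * (mxneg (Qmx T S U) i j * U i j)
       = mxneg (Qmx T S U) i j * ((U i j - U' i j) ^+ 2 / U' i j).
      by field; rewrite gt_eqF.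
    apply: mulr_ge0; first exact: mxpos_ge0.
    by apply: divr_ge0; [exact: sqr_ge0 | exact: ltW].
  lra.
move=> U Up _.
rewrite Fe Ze.
have -> : \sum_(i < n) \sum_(j < k) ((U *m (mxpos (Pmx S U) + Lam)) i j * (U i j) ^+ 2 / U i j)
   = ip U (U *m (mxpos (Pmx S U) + Lam)).
  apply eq_bigr => i _; apply eq_bigr => j _.
  have vp := Up i j; by field; rewrite gt_eqF.
have -> : \sum_(i < n) \sum_(j < k) (2%:R * mxneg (Qmx T S U) i j *
        (((U i j) ^+ 2 + (U i j) ^+ 2) / (2%:R * U i j)))
   = 2%:R * ip U (mxneg (Qmx T S U)).
  rewrite /ip mulr_sumr; apply eq_bigr => i _; rewrite mulr_sumr; apply eq_bigr => j _.
  have vp := Up i j; by field; rewrite gt_eqF.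
ring.
Qed.
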